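(* Let $\delta\ge0$ and edge weights $\omega_{jk}\in\mathbb{R}$ for $j\in[d\ell]$, $k\in[\ell]$. The optimal value of program $(P'')$ is at least the weight of the maximum weight $d$-to-$1$ matching in the complete bipartite graph between LHS-nodes $[d\ell]$ and RHS-nodes $[\ell]$ with weights $\omega$.
   Context: Program $(P'')$: maximize $\sum_{j,k}x_{jk}\omega_{jk}-\delta\sum_{j,k}(x_{jk}\log x_{jk}+y_{jk}\log y_{jk})$ subject to $\sum_j(x_{jk}+y_{jk})\le d$ for all $k\in[\ell]$, $\sum_k(x_{jk}+y_{jk})=1$ for all $j\in[d\ell]$, $x_{jk},y_{jk}\in[0,1]$ (with $0\log0=0$). A $d$-to-$1$ matching matches each LHS-node to at most one RHS-node and each RHS-node to at most $d$ LHS-nodes; its weight is the sum of weights of matched edges. *)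

(* Defs.v *)
From HB Require Import structures.
From mathcomp Require Import all_boot all_order all_algebra.
From mathcomp Require Import all_classical all_reals exp.
Set Implicit Arguments. Unset Strict Implicit. Unset Printing Implicit Defensive.
Import Order.TTheory GRing.Theory Num.Theory.
Local Open Scope ring_scope.
Local Open Scope classical_set_scope.

Definition xlogx {R : realType} (t : R) : R := if t == 0 then 0 else t * ln t.

Section P2.
Context {R : realType} (d l : nat).
Notation LHS := 'I_(d * l).
Notation RHS := 'I_l.

Definition obj (delta : R) (w : LHS -> RHS -> R) (x y : LHS -> RHS -> R) : R :=
  \sum_(j : LHS) \sum_(k : RHS) x j k * w j k
  - delta * \sum_(j : LHS) \sum_(k : RHS) (xlogx (x j k) + xlogx (y j k)).

Definition feasible (x y : LHS -> RHS -> R) : Prop :=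
  [/\ forall k : RHS, \sum_(j : LHS) (x j k + y j k) <= d%:R,
      forall j : LHS, \sum_(k : RHS) (x j k + y j k) = 1,
      forall j k, 0 <= x j k <= 1 &
      forall j k, 0 <= y j k <= 1].

Definition opt_value (delta : R) (w : LHS -> RHS -> R) : R :=
  sup [set v | exists x y, feasible x y /\ v = obj delta w x y].

Definition d_to_1_matching (M : {set LHS * RHS}) : Prop :=
  (forall j : LHS, #|[set k : RHS | (j, k) \in M]| <= 1)%N /\
  (forall k : RHS, #|[set j : LHS | (j, k) \in M]| <= d)%N.

Definition matching_weight (w : LHS -> RHS -> R) (M : {set LHS * RHS}) : R :=
  \sum_(e in M) w e.1 e.2.

End P2.

(* Main.v *)
Set Warnings "-all".
Require Import Defs.
From HB Require Import structures.
From mathcomp Require Import all_boot all_order all_algebra.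
From mathcomp Require Import all_classical all_reals exp.
Import Order.TTheory GRing.Theory Num.Theory.
Local Open Scope ring_scope.

Lemma xlogx_le0 (R : realType) (t : R) : 0 <= t <= 1 -> xlogx t <= 0.
Proof.
move=> /andP[t0 t1]; rewrite /xlogx; case: eqP => // _.
by rewrite mulr_ge0_le0 // ln_le0.
Qed.

Lemma xlogx_ge (R : realType) (t : R) : 0 <= t <= 1 -> -1 <= xlogx t.
Proof.
move=> /andP[t0 t1]; rewrite /xlogx; case: eqP => [_|/eqP tn0]; first by rewrite lerN10.
have tp : 0 < t by rewrite lt0r tn0.
have h : ln (1 + (t^-1 - 1)) <= t^-1 - 1 by apply: le_ln1Dx; rewrite ltrBrDl subrr invr_gt0.
rewrite addrC subrK lnV ?posrE // in h.
have : t * - ln t <= t * (t^-1 - 1) by rewrite ler_wpM2l.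
rewrite mulrBr mulfV ?tn0 // mulr1 mulrN => h2.
have : - (t * ln t) <= 1 by apply: (le_trans h2); rewrite lerBlDr lerDl.
by rewrite lerNl.
Qed.

Theorem mainTheorem9 (R : realType) (d l : nat) (delta : R)
    (w : 'I_(d * l) -> 'I_l -> R) :
  0 <= delta ->
  forall M : {set 'I_(d * l) * 'I_l},
    @d_to_1_matching d l M -> @matching_weight R d l w M <= @opt_value R d l delta w.
Proof.
move=> d0 M [Hr Hm].
pose x (j : 'I_(d * l)) (k : 'I_l) : R := ((j, k) \in M)%:R.
pose m k := \sum_j x j k.
pose r j := \sum_k x j k.
pose U := \sum_k (d%:R - m k).
pose y j k := (1 - r j) * ((d%:R - m k) / U).
have x01 j k : 0 <= x j k <= 1.
  by rewrite /x; case: ((j,k) \in M); rewrite ?ler01 ?lexx.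
have r1 j : r j <= 1.
  rewrite /r (eq_bigr (fun k => if k \in [set k | (j,k) \in M]%classic then 1 else 0)).
    rewrite -big_mkcond sumr_const. by rewrite -[1]/(1%:R) ler_nat; apply: Hr.
  move=> k _; rewrite /x; case: ifPn => h.
    by move: h; rewrite in_setE /= => ->.
  apply/eqP; rewrite pnatr_eq0 eqb0; apply/negP => h'; apply: (negP h); by rewrite in_setE.
have md k : m k <= d%:R.
  rewrite /m (eq_bigr (fun j => if j \in [set j | (j,k) \in M]%classic then 1 else 0)).
    rewrite -big_mkcond sumr_const. by rewrite ler_nat; apply: Hm.
  move=> j _; rewrite /x; case: ifPn => h.
    by move: h; rewrite in_setE /= => ->.
  apply/eqP; rewrite pnatr_eq0 eqb0; apply/negP => h'; apply: (negP h); by rewrite in_setE.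
have r0 j : 0 <= r j by apply: sumr_ge0 => k _; case/andP: (x01 j k).
have m0 k : 0 <= m k by apply: sumr_ge0 => j _; case/andP: (x01 j k).
have dm0 k : 0 <= d%:R - m k by rewrite subr_ge0.
have sumU : \sum_j (1 - r j) = U.
  rewrite /U !sumrB /r /m (exchange_big _ _ _ _ _ (fun j k => x j k)) /=.
  by rewrite !sumr_const !card_ord natrM mulr_natr.
have U0 : 0 <= U by apply: sumr_ge0.
have dmU k : (d%:R - m k) / U <= 1.
  have [->|Un0] := eqVneq U 0; first by rewrite invr0 mulr0.
  have Up : 0 < U by rewrite lt0r Un0.
  rewrite ler_pdivrMr // mul1r /U (bigD1 k) //= lerDl.
  by apply: sumr_ge0.
have dmU0 k : 0 <= (d%:R - m k) / U by rewrite divr_ge0.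
have y01 j k : 0 <= y j k <= 1.
  apply/andP; split; first by rewrite mulr_ge0 // subr_ge0.
  by rewrite -[1]mulr1 ler_pM // ?subr_ge0 // lerBlDr lerDl.
have xlog_le := @xlogx_le0 R.
have feas : feasible x y.
  split => //.
  - move=> k; rewrite big_split /= -/(m k) /y -mulr_suml sumU.
    have [->|Un0] := eqVneq U 0; first by rewrite invr0 mulr0 mul0r addr0.
    by rewrite mulrCA mulfV // mulr1 addrC subrK.
  - move=> j; rewrite big_split /= -/(r j) /y -mulr_sumr -mulr_suml -/U.
    have [U00|Un0] := eqVneq U 0.
      have : \sum_j (1 - r j) == 0 by rewrite sumU U00.
      rewrite psumr_eq0; last by move=> i _; rewrite subr_ge0.
      move/allP => /(_ j (mem_index_enum _)) /=; rewrite subr_eq0 => /eqP <-.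
      by rewrite subrr mul0r addr0.
    by rewrite mulfV // mulr1 addrC subrK.
have Hub : has_ubound [set v | exists x y, @feasible R d l x y /\ v = obj delta w x y].
  exists (\sum_j \sum_k `|w j k| + delta * (\sum_(j : 'I_(d * l)) \sum_(k : 'I_l) 2)).
  move=> v [x' [y' [[_ _ hx hy] ->]]].
  rewrite /obj; apply: lerD.
    apply: ler_sum => j _; apply: ler_sum => k _.
    apply: (le_trans (ler_norm _)); rewrite normrM.
    case/andP: (hx j k) => a b; rewrite ger0_norm //.
    by rewrite ler_piMl.
  rewrite -mulrN; apply: ler_wpM2l => //.
  rewrite -sumrN; apply: ler_sum => j _; rewrite -sumrN; apply: ler_sum => k _.
  rewrite lerNl -[2]/(1+1) opprD; apply: lerD; apply: xlogx_ge; [exact: hx|exact: hy].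
have Hin : [set v | exists x y, @feasible R d l x y /\ v = obj delta w x y]%classic (obj delta w x y).
  by exists x, y.
apply: le_trans (ub_le_sup Hub Hin).
have -> : matching_weight w M = \sum_j \sum_k x j k * w j k.
  rewrite /matching_weight big_mkcond pair_big /=; apply: eq_bigr => [[j k]] _ /=.
  by rewrite /x; case: ((j,k) \in M); rewrite ?mul1r ?mul0r.
rewrite /obj -[X in X <= _]subr0; apply: lerD => //; rewrite lerNr oppr0 oppr0; apply: mulr_ge0_le0 => //.
apply: sumr_le0 => j _; apply: sumr_le0 => k _.
rewrite -[0]addr0; apply: lerD; exact: xlogx_le0.
Qed.
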